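(* Let $y(t)=e^{i\theta(t)}\in C$ be the solution of the spherical mean curvature flow $y'(t)=H^S(y(t))$ with $y(0)=e^{i\theta_0}$, $0<\theta_0<\pi/g$. Then, on its interval of existence, $$\cos g\theta(t)=e^{gnt}\{\cos g\theta_0+\delta\}-\delta.$$
   Context: Let $M^n$ be a compact isoparametric hypersurface in the unit sphere $S^{n+1}\subset\mathbb{R}^{n+2}$ (constant principal curvatures) with $g$ distinct principal curvatures; then $g\in\{1,2,3,4,6\}$. Fix $x_0\in M$ and identify the 2-dimensional normal space $\nu_{x_0}M$ of $M$ in $\mathbb{R}^{n+2}$ with $\mathbb{C}$ so that the two focal submanifolds $M_+$, $M_-$ ($\dim M_+\le\dim M_-$) meet the normal circle at $1$ and $e^{i\pi/g}$. The Weyl chamber is $C=\{re^{i\theta}:r>0,\ 0<\theta<\pi/g\}$. The multiplicity data is $(m_1,m_2)$, $m_1\le m_2$, with $m_1=m_2$ if $g$ is odd and $(m_1+m_2)g=2n$. For $x\in C$, $M_x$ is the submanifold of $\mathbb{R}^{n+2}$ parallel to $M$ through $x$, and $H^S(x)$ is its mean curvature vector at $x$ as a hypersurface of $S^{n+1}(|x|)$, which equals $-\frac{n}{r}ie^{i\theta}\{\cot g\theta+\delta\csc g\theta\}$ for $x=re^{i\theta}$. The spherical MCF of $M_{y(0)}$ is the family $M_{y(t)}$. Set $\delta=(m_2-m_1)/(m_2+m_1)$ if $g\ge2$ and $\delta=0$ if $g=1$. *)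

(* Defs.v *)
(* real analysis with Stdlib Reals.
   Points of the normal plane nu_{x0} M ~ C are represented as pairs (x1,x2) : R*R,
   x1 + i x2. *)
From Stdlib Require Import Reals.
Open Scope R_scope.

Definition cmod (x : R * R) : R := sqrt (fst x * fst x + snd x * snd x).

(* the argument theta in (0, pi) of a point with positive imaginary part *)
Definition carg (x : R * R) : R := acos (fst x / cmod x).

Definition in_chamber (g : nat) (x : R * R) : Prop :=
  0 < snd x /\ 0 < carg x < PI / INR g.

Definition delta (g m1 m2 : nat) : R :=
  if (g <=? 1)%nat then 0 else (INR m2 - INR m1) / (INR m2 + INR m1).

(* H^S(x) = -(n/r) i e^{i theta} { cot(g theta) + delta csc(g theta) },  x = r e^{i theta}.
   Since i e^{i theta} = (-sin theta, cos theta), this is the pair below. *)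
Definition HS (g m1 m2 n : nat) (x : R * R) : R * R :=
  let r := cmod x in
  let th := carg x in
  let K := cos (INR g * th) / sin (INR g * th) + delta g m1 m2 / sin (INR g * th) in
  ( INR n / r * K * sin th , - (INR n / r * K * cos th) ).

Definition admissible_data (g m1 m2 n : nat) : Prop :=
  (g = 1 \/ g = 2 \/ g = 3 \/ g = 4 \/ g = 6)%nat /\
  (1 <= m1)%nat /\ (m1 <= m2)%nat /\
  (Nat.odd g = true -> m1 = m2) /\
  ((m1 + m2) * g = 2 * n)%nat.

(* Main.v *)
Require Import Defs.
From Stdlib Require Import Reals Lra.
Open Scope R_scope.

Lemma dacos x : -1 < x < 1 -> derivable_pt_lim acos x (-1 / sqrt (1 - x²)).
Proof.
  intro H. pose proof (derive_pt_acos x H) as Hd. revert Hd.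
  unfold derive_pt. destruct (derivable_pt_acos x H) as [l Hl]. simpl.
  intros ->. exact Hl.
Qed.

Lemma dcomp (f h : R -> R) x l1 l2 : derivable_pt_lim f x l1 ->
  derivable_pt_lim h (f x) l2 -> derivable_pt_lim (fun t => h (f t)) x (l2 * l1).
Proof. intros; apply (derivable_pt_lim_comp f h); auto. Qed.

Lemma dmult (f h : R -> R) x l1 l2 : derivable_pt_lim f x l1 ->
  derivable_pt_lim h x l2 -> derivable_pt_lim (fun t => f t * h t) x (l1 * h x + f x * l2).
Proof. intros; apply (derivable_pt_lim_mult f h); auto. Qed.

Lemma dplus (f h : R -> R) x l1 l2 : derivable_pt_lim f x l1 ->
  derivable_pt_lim h x l2 -> derivable_pt_lim (fun t => f t + h t) x (l1 + l2).
Proof. intros; apply (derivable_pt_lim_plus f h); auto. Qed.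

Lemma dconst c x : derivable_pt_lim (fun _ => c) x 0.
Proof. apply (derivable_pt_lim_const c x). Qed.

Lemma dext (f h : R -> R) x l l' : derivable_pt_lim f x l -> l = l' ->
  (forall t, f t = h t) -> derivable_pt_lim h x l'.
Proof.
  intros H -> E. replace h with f; auto. apply FunctionalExtensionality.functional_extensionality; auto.
Qed.

Lemma dlin c x : derivable_pt_lim (fun t => c * t) x c.
Proof.
  eapply dext. apply (derivable_pt_lim_scal id c x 1). apply derivable_pt_lim_id.
  ring. intro; reflexivity.
Qed.

Lemma dscal c (f : R -> R) x l : derivable_pt_lim f x l -> derivable_pt_lim (fun t => c * f t) x (c * l).
Proof. intro; apply (derivable_pt_lim_scal f c x l); auto. Qed.

Lemma const_on (f : R -> R) a b : (forall x, a < x < b -> derivable_pt_lim f x 0) ->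
  forall s t, a < s < b -> a < t < b -> f s = f t.
Proof.
  intros H s t Hs Ht. destruct (Rtotal_order s t) as [h|[h|h]].
  - destruct (MVT_cor2 f (fun _ => 0) s t h) as [c [E _]].
    + intros c Hc; apply H; lra.
    + lra.
  - subst; auto.
  - destruct (MVT_cor2 f (fun _ => 0) t s h) as [c [E _]].
    + intros c Hc; apply H; lra.
    + lra.
Qed.

Theorem proposition4p3 (g m1 m2 n : nat) (theta0 a b : R) (y1 y2 : R -> R) :
  admissible_data g m1 m2 n ->
  0 < theta0 < PI / INR g ->
  a < 0 < b ->
  y1 0 = cos theta0 -> y2 0 = sin theta0 ->
  (forall t, a < t < b -> in_chamber g (y1 t, y2 t)) ->
  (forall t, a < t < b ->
     derivable_pt_lim y1 t (fst (HS g m1 m2 n (y1 t, y2 t))) /\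
     derivable_pt_lim y2 t (snd (HS g m1 m2 n (y1 t, y2 t)))) ->
  forall t, a < t < b ->
    exists theta : R,
      0 < theta < PI / INR g /\
      y1 t = cos theta /\ y2 t = sin theta /\
      cos (INR g * theta) =
        exp (INR g * INR n * t) * (cos (INR g * theta0) + delta g m1 m2)
        - delta g m1 m2.
Proof.
  intros Hadm Hth0 Hab Hy10 Hy20 Hch Hder t Ht.
  set (d := delta g m1 m2).
  assert (Hg : 1 <= INR g).
  { replace 1 with (INR 1) by reflexivity. apply le_INR.
    destruct Hadm as [Hg _]. destruct Hg as [->|[->|[->|[->| ->]]]]; auto with arith. }
  assert (HPg : PI / INR g <= PI).
  { pose proof PI_RGT_0. unfold Rdiv.
    assert (/ INR g <= 1).
    { rewrite <- Rinv_1. apply Rinv_le_contravar; lra. }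
    assert (0 < / INR g) by (apply Rinv_0_lt_compat; lra). nra. }
  assert (Geo : forall s, a < s < b ->
    0 < y2 s /\ 0 < cmod (y1 s, y2 s) /\
    cmod (y1 s, y2 s) * cmod (y1 s, y2 s) = y1 s * y1 s + y2 s * y2 s /\
    cos (carg (y1 s, y2 s)) = y1 s / cmod (y1 s, y2 s) /\
    sin (carg (y1 s, y2 s)) = y2 s / cmod (y1 s, y2 s)).
  { intros s Hs. destruct (Hch s Hs) as [Hy2 _]. simpl in Hy2.
    assert (Hpos : 0 < y1 s * y1 s + y2 s * y2 s) by nra.
    assert (Hr : 0 < cmod (y1 s, y2 s)) by (unfold cmod; simpl; apply sqrt_lt_R0; lra).
    assert (Hr2 : cmod (y1 s, y2 s) * cmod (y1 s, y2 s) = y1 s * y1 s + y2 s * y2 s)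
      by (unfold cmod; simpl; apply sqrt_sqrt; lra).
    set (r := cmod (y1 s, y2 s)) in *.
    set (q := y1 s / r).
    assert (Hq : q * r = y1 s) by (unfold q; field; lra).
    assert (Hq1 : q * q <= 1).
    { assert (q * q * (r * r) <= 1 * (r * r)) by nra. nra. }
    assert (Hq2 : -1 <= q <= 1) by (split; nra).
    repeat split; auto.
    - unfold carg. fold r. change (fst (y1 s, y2 s)) with (y1 s). fold q. apply cos_acos; auto.
    - unfold carg. fold r. change (fst (y1 s, y2 s)) with (y1 s). fold q. rewrite sin_acos; auto.
      replace (1 - q²) with (Rsqr (y2 s / r)).
      + apply sqrt_Rsqr. unfold Rdiv. apply Rmult_le_pos; [lra|].
        left; apply Rinv_0_lt_compat; lra.
      + unfold Rsqr. apply Rmult_eq_reg_r with (r * r); [|nra].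
        replace (y2 s / r * (y2 s / r) * (r * r)) with (y2 s * y2 s) by (field; lra).
        replace ((1 - q * q) * (r * r)) with (r * r - (q * r) * (q * r)) by ring.
        rewrite Hq, Hr2. ring. }
  assert (Hu : forall s, a < s < b -> y1 s * y1 s + y2 s * y2 s = 1).
  { intros s Hs.
    transitivity (y1 0 * y1 0 + y2 0 * y2 0).
    2:{ rewrite Hy10, Hy20. pose proof (sin2_cos2 theta0). unfold Rsqr in H. lra. }
    apply (const_on (fun s => y1 s * y1 s + y2 s * y2 s) a b); auto; try lra.
    intros x Hx. destruct (Hder x Hx) as [D1 D2].
    destruct (Geo x Hx) as [Hy2 [Hr [Hr2 [Hc Hs']]]].
    eapply dext. exact (dplus _ _ _ _ _ (dmult _ _ _ _ _ D1 D1) (dmult _ _ _ _ _ D2 D2)).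
    2:{ intro; reflexivity. }
    unfold HS. simpl fst; simpl snd. rewrite Hc, Hs'. unfold Rdiv; ring. }
  assert (Hr1 : forall s, a < s < b -> cmod (y1 s, y2 s) = 1).
  { intros s Hs. unfold cmod; simpl. rewrite Hu; auto. apply sqrt_1. }
  assert (Hcarg : forall s, a < s < b -> carg (y1 s, y2 s) = acos (y1 s)).
  { intros s Hs. unfold carg. rewrite Hr1; auto. simpl. unfold Rdiv. rewrite Rinv_1, Rmult_1_r. auto. }
  assert (Hy1r : forall s, a < s < b -> -1 < y1 s < 1).
  { intros s Hs. destruct (Geo s Hs) as [Hy2 _]. pose proof (Hu s Hs). split; nra. }
  assert (Hsq : forall s, a < s < b -> sqrt (1 - (y1 s)²) = y2 s).
  { intros s Hs. destruct (Geo s Hs) as [Hy2 _]. pose proof (Hu s Hs).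
    replace (1 - (y1 s)²) with (Rsqr (y2 s)) by (unfold Rsqr; lra).
    apply sqrt_Rsqr; lra. }
  set (F := fun s => (cos (INR g * acos (y1 s)) + d) * exp ((- (INR g * INR n)) * s)).
  assert (HF : F t = F 0).
  { apply (const_on F a b); auto; try lra.
    intros x Hx. destruct (Hder x Hx) as [D1 _].
    destruct (Geo x Hx) as [Hy2 [Hr [Hr2 [Hc Hs']]]].
    assert (Hsin : 0 < sin (INR g * acos (y1 x))).
    { destruct (Hch x Hx) as [_ [Hc1 Hc2]]. rewrite Hcarg in Hc1, Hc2; auto.
      apply sin_gt_0.
      - apply Rmult_lt_0_compat; lra.
      - apply Rmult_lt_reg_l with (/ INR g). apply Rinv_0_lt_compat; lra.
        rewrite <- Rmult_assoc, Rinv_l by lra. rewrite Rmult_1_l.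
        unfold Rdiv in Hc2. lra. }
    pose proof (dacos (y1 x) (Hy1r x Hx)) as DA.
    pose proof (dcomp _ _ _ _ _ D1 DA) as DT.
    pose proof (dscal (INR g) _ _ _ DT) as DGT.
    pose proof (dcomp _ _ _ _ _ DGT (derivable_pt_lim_cos _)) as DC.
    pose proof (dplus _ _ _ _ _ DC (dconst d x)) as DCd.
    pose proof (dcomp _ _ _ _ _ (dlin (- (INR g * INR n)) x) (derivable_pt_lim_exp _)) as DE.
    pose proof (dmult _ _ _ _ _ DCd DE) as DF.
    eapply dext. exact DF. 2:{ intro; reflexivity. }
    rewrite Hsq; auto. unfold HS. simpl fst. rewrite Hcarg, Hr1; auto.
    rewrite sin_acos, Hsq by (auto; pose proof (Hy1r x Hx); lra). fold d. field; repeat split; lra. }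
  exists (acos (y1 t)).
  destruct (Hch t Ht) as [_ [Hc1 Hc2]]. rewrite Hcarg in Hc1, Hc2; auto.
  pose proof (Hy1r t Ht) as Hy1t.
  repeat split; try lra.
  - rewrite cos_acos; lra.
  - rewrite sin_acos by lra. rewrite Hsq; auto.
  - unfold F in HF. rewrite Hy10, acos_cos in HF by lra.
    rewrite Rmult_0_r, exp_0, Rmult_1_r in HF.
    fold d. rewrite <- HF.
    assert (E : exp (INR g * INR n * t) * exp (- (INR g * INR n) * t) = 1).
    { rewrite <- exp_plus. replace (INR g * INR n * t + - (INR g * INR n) * t) with 0 by ring.
      apply exp_0. }
    transitivity ((cos (INR g * acos (y1 t)) + d) * (exp (INR g * INR n * t) * exp (- (INR g * INR n) * t)) - d).
    + rewrite E; ring.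
    + ring.
Qed.
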